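(* Let $D \ge 1$ and let $L \colon \mathbb{Z}^D \times \mathbb{R}_+ \to \mathbb{R}$ be a discrete scale-space representation of a discrete signal $f \colon \mathbb{Z}^D \to \mathbb{R}$. Then $L$ satisfies the differential equation $$\partial_s L = \mathcal{A} L, \qquad (\mathcal{A} L)(x;s) = \sum_{\xi \in \mathbb{Z}^D} a_\xi \, L(x+\xi;s),$$ with initial condition $L(\cdot;0) = f(\cdot)$, for some infinitesimal scale-space generator $\mathcal{A}$ whose coefficients $a_\xi \in \mathbb{R}$ satisfy: (i) the locality condition: $a_\xi = 0$ if $|\xi|_\infty > 1$; (ii) the positivity constraint: $a_\xi \ge 0$ if $\xi \ne 0$; (iii) the zero sum condition: $\sum_{\xi \in \mathbb{Z}^D} a_\xi = 0$.
   Context: A one-parameter family of kernels $T \colon \mathbb{Z}^D \times \mathbb{R}_+ \to \mathbb{R}$ is a discrete pre-scale-space family of kernels if $T(\cdot;0) = \delta(\cdot)$ (discrete delta), $T(\cdot;s_1) * T(\cdot;s_2) = T(\cdot;s_1+s_2)$ for all $s_1, s_2 \ge 0$, and $\|T(\cdot;s) - \delta(\cdot)\|_1 \to 0$ as $s \downarrow 0$. The discrete pre-scale-space representation of $f$ generated by $T$ is $L(x;s) = \sum_{\xi \in \mathbb{Z}^D} T(\xi;s) f(x-\xi)$. Such an $L$ possesses pre-scale-space properties (does not enhance local extrema) if for every $s_0 \in \mathbb{R}_+$: whenever $x_0 \in \mathbb{Z}^D$ is a local maximum of $x \mapsto L(x;s_0)$ then $\partial_s L(x_0;s_0) \le 0$,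 and whenever $x_0$ is a local minimum then $\partial_s L(x_0;s_0) \ge 0$. Local extrema are understood in the weak (non-strict) sense with respect to the neighbourhood $\{x : \|x - x_0\|_\infty = 1\}$, i.e. $x_0$ is a local maximum if $L(x_0;s_0) \ge L(x;s_0)$ for all $x$ with $\|x-x_0\|_\infty = 1$ (analogously for minima). A discrete pre-scale-space family $T$ is a discrete scale-space family of kernels if for every discrete signal $f \in l_1$ the pre-scale-space representation of $f$ generated by $T$ possesses pre-scale-space properties. A discrete scale-space representation of $f$ is a discrete pre-scale-space representation of $f$ generated by a discrete scale-space family of kernels. *)

(* Defs.v *)
From HB Require Import structures.
From mathcomp Require Import all_boot all_order all_algebra.
From mathcomp Require Import all_classical all_reals all_analysis.
Set Implicit Arguments. Unset Strict Implicit. Unset Printing Implicit Defensive.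
Import Order.TTheory GRing.Theory Num.Theory.
Import numFieldNormedType.Exports.
Local Open Scope classical_set_scope.
Local Open Scope ring_scope.

Notation ZD D := 'rV[int]_D.

Definition norminf (D : nat) (x : ZD D) : nat := (\max_(i < D) absz (x ord0 i))%N.

Definition box_sum (R : realType) (D : nat) (n : nat) (g : ZD D -> R) : R :=
  \sum_(j : 'rV['I_(2 * n + 1)]_D) g (\row_i ((j ord0 i : nat)%:Z - n%:Z)).

Definition l1_summable (R : realType) (D : nat) (g : ZD D -> R) : Prop :=
  exists M : R, forall n : nat, box_sum n (fun x => `|g x|) <= M.

(* sum over Z^D (meaningful for l1_summable g: limit of box sums) *)
Definition lsum (R : realType) (D : nat) (g : ZD D -> R) : R :=
  lim ((fun n : nat => box_sum n g) @ \oo).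

Definition ddelta (R : realType) (D : nat) (x : ZD D) : R := (x == 0)%:R.

Definition pre_scale_space_family (R : realType) (D : nat)
    (T : ZD D -> R -> R) : Prop :=
  [/\ (forall s, 0 <= s -> l1_summable (fun x => T x s)),
      (forall x, T x 0 = ddelta R x),
      (forall s1 s2 x, 0 <= s1 -> 0 <= s2 ->
          lsum (fun xi => T xi s1 * T (x - xi) s2) = T x (s1 + s2)) &
      (fun s => lsum (fun x => `|T x s - ddelta R x|)) @ 0^'+ --> (0 : R)].

Definition pre_ss_rep (R : realType) (D : nat) (T : ZD D -> R -> R)
    (f : ZD D -> R) : ZD D -> R -> R :=
  fun x s => lsum (fun xi => T xi s * f (x - xi)).

(* d is the derivative of s |-> L(x;s) at s0 >= 0 (one-sided at s0 = 0,
   since L is only considered on s >= 0) *)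
Definition has_sderiv (R : realType) (D : nat) (L : ZD D -> R -> R)
    (x : ZD D) (s0 d : R) : Prop :=
  (fun h => (L x (s0 + h) - L x s0) / h)
    @ within [set h | h != 0 /\ 0 <= s0 + h] (nbhs (0 : R)) --> d.

Definition is_local_max (R : realType) (D : nat) (L : ZD D -> R -> R)
    (x0 : ZD D) (s0 : R) : Prop :=
  forall x, norminf (x - x0) = 1%N -> L x s0 <= L x0 s0.

Definition is_local_min (R : realType) (D : nat) (L : ZD D -> R -> R)
    (x0 : ZD D) (s0 : R) : Prop :=
  forall x, norminf (x - x0) = 1%N -> L x0 s0 <= L x s0.

Definition pre_scale_space_properties (R : realType) (D : nat)
    (L : ZD D -> R -> R) : Prop :=
  forall s0 : R, 0 <= s0 -> forall x0 : ZD D,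
    (is_local_max L x0 s0 -> exists2 d, has_sderiv L x0 s0 d & d <= 0) /\
    (is_local_min L x0 s0 -> exists2 d, has_sderiv L x0 s0 d & 0 <= d).

Definition scale_space_family (R : realType) (D : nat)
    (T : ZD D -> R -> R) : Prop :=
  pre_scale_space_family T /\
  forall f : ZD D -> R, l1_summable f ->
    pre_scale_space_properties (pre_ss_rep T f).

(* Main.v *)
Require Import Defs.
From HB Require Import structures.
From mathcomp Require Import all_boot all_order all_algebra.
From mathcomp Require Import all_classical all_reals all_analysis.
From mathcomp Require Import zify ring lra.
Import Order.TTheory GRing.Theory Num.Theory.
Import numFieldNormedType.Exports.
Set Implicit Arguments. Unset Strict Implicit. Unset Printing Implicit Defensive.
Local Open Scope classical_set_scope.
Local Open Scope ring_scope.

Definition phi (D n : nat) (j : 'rV['I_(2 * n + 1)]_D) : ZD D :=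
  \row_i ((j ord0 i : nat)%:Z - n%:Z).

Lemma norminf_leP D (x : ZD D) n :
  reflect (forall i, (absz (x ord0 i) <= n)%N) (norminf x <= n)%N.
Proof. by apply: (iffP (bigmax_leqP _ _ _)) => H i; [apply: H | move=> _; apply: H]. Qed.

Lemma norminf_ge D (x : ZD D) i : (absz (x ord0 i) <= norminf x)%N.
Proof. exact: (@leq_bigmax _ (fun i => absz (x ord0 i)) i). Qed.

Lemma abszD_le (a b : int) : (absz (a + b)%R <= absz a + absz b)%N.
Proof. lia. Qed.

Lemma absz_shift_id (a : int) (n : nat) : (absz a <= n)%N ->
  ((absz (a + n%:Z)%R : nat)%:Z - n%:Z)%R = a.
Proof. lia. Qed.

Lemma norminfD D (x y : ZD D) : (norminf (x + y) <= norminf x + norminf y)%N.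
Proof.
apply/norminf_leP => i; rewrite mxE.
apply: leq_trans (abszD_le _ _) _.
by apply: leq_add; apply: norminf_ge.
Qed.

Lemma norminfN D (x : ZD D) : norminf (- x) = norminf x.
Proof.
apply/eqP; rewrite eqn_leq; apply/andP; split; apply/norminf_leP => i;
  rewrite ?mxE ?abszN.
- exact: norminf_ge.
- by have := norminf_ge (- x) i; rewrite mxE abszN.
Qed.

Lemma norminfB D (x y : ZD D) : norminf (x - y) = norminf (y - x).
Proof. by rewrite -norminfN opprB. Qed.

Lemma norminf0 D : norminf (0 : ZD D) = 0%N.
Proof. by apply/eqP; rewrite -leqn0; apply/norminf_leP => i; rewrite mxE. Qed.

Lemma norminf_eq0 D (x : ZD D) : (norminf x == 0%N) = (x == 0).
Proof.
apply/idP/eqP => [|->]; last by rewrite norminf0.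
rewrite -leqn0 => /norminf_leP H; apply/rowP => i; rewrite mxE.
by have := H i; rewrite leqn0 absz_eq0 => /eqP.
Qed.

Lemma norminf_phi D n (j : 'rV['I_(2 * n + 1)]_D) : (norminf (phi j) <= n)%N.
Proof.
apply/norminf_leP => i; rewrite mxE.
have := ltn_ord (j ord0 i); lia.
Qed.

Lemma phi_inj D n : injective (@phi D n).
Proof.
move=> j k /rowP H; apply/rowP => i; apply: val_inj.
move: (H i); rewrite !mxE => E.
have : (j ord0 i : nat)%:Z = (k ord0 i : nat)%:Z.
  by apply: (addIr (- n%:Z)).
by case.
Qed.

Lemma count_box (R : realType) D n (y : ZD D) :
  \sum_(j : 'rV['I_(2 * n + 1)]_D) ((phi j == y)%:R : R) = (norminf y <= n)%N%:R.
Proof.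
case: (boolP (norminf y <= n)%N) => Hy.
  move/norminf_leP: (Hy) => Hi.
  have Hlt i : (absz (y ord0 i + n%:Z)%R < 2 * n + 1)%N.
    by have := Hi i; lia.
  pose j0 : 'rV['I_(2 * n + 1)]_D := \row_i (Ordinal (Hlt i)).
  have Ej0 : phi j0 = y.
    apply/rowP => i; rewrite !mxE /=.
    exact: absz_shift_id (Hi i).
  rewrite (bigD1 j0) //= Ej0 eqxx big1 ?addr0 // => j Hj.
  case: eqP => // Ej; exfalso; move/eqP: Hj; apply.
  by apply: phi_inj; rewrite Ej Ej0.
rewrite big1 // => j _; case: eqP => // Ej.
by move: Hy; rewrite -Ej norminf_phi.
Qed.

Lemma box_sum_pt (R : realType) D n (c : ZD D -> R) (y : ZD D) :
  box_sum n (fun z => c z * (z == y)%:R) = c y * (norminf y <= n)%N%:R.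
Proof.
rewrite /box_sum -(count_box R) mulr_sumr; apply: eq_bigr => j _.
case: eqP => [->|]; last by rewrite !mulr0.
by [].
Qed.

Lemma box_sum_shift (R : realType) D n m (c : ZD D) (u : ZD D -> R) :
  (n + norminf c <= m)%N ->
  box_sum n (fun y => u (y + c)) =
  box_sum m (fun y => u y * (norminf (y - c) <= n)%N%:R).
Proof.
move=> Hm; rewrite /box_sum.
transitivity (\sum_(k : 'rV['I_(2 * n + 1)]_D) \sum_(j : 'rV['I_(2 * m + 1)]_D)
    u (phi j) * (phi j == phi k + c)%:R).
  apply: eq_bigr => k _.
  have := box_sum_pt m u (phi k + c); rewrite /box_sum => ->.
  suff -> : (norminf (phi k + c) <= m)%N by rewrite mulr1.
  apply: leq_trans (norminfD _ _) _; apply: leq_trans Hm.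
  by rewrite leq_add2r norminf_phi.
rewrite exchange_big /=; apply: eq_bigr => j _.
rewrite -(count_box R) mulr_sumr; apply: eq_bigr => k _.
have -> : (phi j == phi k + c) = (phi k == phi j - c).
  by apply/eqP/eqP => [->|->]; [rewrite addrK | rewrite subrK].
by [].
Qed.

Lemma box_sum_mono (R : realType) D n m (u : ZD D -> R) : (n <= m)%N ->
  box_sum n u = box_sum m (fun y => u y * (norminf y <= n)%N%:R).
Proof.
move=> Hm; have := @box_sum_shift R D n m 0 u; rewrite norminf0 addn0 => /(_ Hm).
under eq_fun do rewrite addr0; move=> ->.
by under eq_fun do rewrite subr0.
Qed.

Section L1.
Variables (R : realType) (D : nat).
Implicit Types (u v w : ZD D -> R) (x y z : ZD D).

Lemma box_sum_ge0 n w : (forall y, 0 <= w y) -> 0 <= box_sum n w.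
Proof. by move=> H; apply: sumr_ge0 => j _. Qed.

Lemma box_sum_le n u v : (forall y, u y <= v y) -> box_sum n u <= box_sum n v.
Proof. by move=> H; apply: ler_sum => j _. Qed.

Lemma box_sumD n u v : box_sum n (fun y => u y + v y) = box_sum n u + box_sum n v.
Proof. by rewrite /box_sum big_split. Qed.

Lemma box_sumB n u v : box_sum n (fun y => u y - v y) = box_sum n u - box_sum n v.
Proof. by rewrite /box_sum sumrB. Qed.

Lemma box_sumZ n (c : R) u : box_sum n (fun y => c * u y) = c * box_sum n u.
Proof. by rewrite /box_sum mulr_sumr. Qed.

Lemma box_sumZr n (c : R) u : box_sum n (fun y => u y * c) = box_sum n u * c.
Proof. by rewrite /box_sum mulr_suml. Qed.

Lemma box_sum_norm n u : `|box_sum n u| <= box_sum n (fun y => `|u y|).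
Proof. exact: ler_norm_sum. Qed.

Lemma box_sum_ext n u v : u =1 v -> box_sum n u = box_sum n v.
Proof. by move=> H; apply: eq_bigr => j _. Qed.

Lemma box_sum_nondec w : (forall y, 0 <= w y) ->
  {homo (fun n => box_sum n w) : n m / (n <= m)%N >-> n <= m}.
Proof.
move=> H n m Hnm /=; rewrite (box_sum_mono w Hnm); apply: box_sum_le => y.
by case: (norminf y <= n)%N; rewrite ?mulr1 ?mulr0.
Qed.

Lemma box_sum_term n w y : (forall z, 0 <= w z) -> (norminf y <= n)%N ->
  w y <= box_sum n w.
Proof.
move=> H Hy; have := box_sum_pt n w y; rewrite Hy mulr1 => <-.
by apply: box_sum_le => z; case: (z == y); rewrite ?mulr1 ?mulr0.
Qed.

Lemma l1_bound u : l1_summable u -> exists G, forall y, `|u y| <= G.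
Proof.
case=> M HM; exists M => y; apply: le_trans (HM (norminf y)).
by apply: (@box_sum_term _ (fun z => `|u z|)).
Qed.

Lemma cvg_box_nonneg w M : (forall y, 0 <= w y) -> (forall n, box_sum n w <= M) ->
  (fun n => box_sum n w) @ \oo --> lsum w.
Proof.
move=> H HM.
apply: (nondecreasing_is_cvgn (box_sum_nondec H)).
by exists M => _ [n _ <-].
Qed.

Lemma lsum_cvg_eq u l : (fun n => box_sum n u) @ \oo --> l -> lsum u = l.
Proof. by move=> H; apply: (cvg_lim (@Rhausdorff R)). Qed.

Lemma l1_cvg u : l1_summable u -> (fun n => box_sum n u) @ \oo --> lsum u.
Proof.
case=> M HM.
pose up := fun y => (`|u y| + u y) / 2.
pose un := fun y => (`|u y| - u y) / 2.
have Nu y : - u y <= `|u y| by rewrite -normrN ler_norm.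
have Pu y : u y <= `|u y| by rewrite ler_norm.
have Hup y : 0 <= up y.
  by rewrite /up divr_ge0 //; have := Nu y; lra.
have Hun y : 0 <= un y.
  by rewrite /un divr_ge0 //; have := Pu y; lra.
have Hu y : u y = up y - un y by rewrite /up /un; field.
have Bp n : box_sum n up <= M.
  apply: le_trans (HM n); apply: box_sum_le => y.
  by rewrite /up; have := Pu y; lra.
have Bn n : box_sum n un <= M.
  apply: le_trans (HM n); apply: box_sum_le => y.
  by rewrite /un; have := Nu y; lra.
have Cp := cvg_box_nonneg Hup Bp.
have Cn := cvg_box_nonneg Hun Bn.
have E : (fun n => box_sum n u) = (fun n => box_sum n up - box_sum n un).
  by apply: funext => n; rewrite -box_sumB; apply: box_sum_ext.
have C : (fun n => box_sum n u) @ \oo --> lsum up - lsum un.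
  by rewrite E; apply: cvgB.
by rewrite (lsum_cvg_eq C).
Qed.


Lemma l1_le u v : l1_summable u -> (forall y, `|v y| <= `|u y|) -> l1_summable v.
Proof.
case=> M HM H; exists M => n; apply: le_trans (HM n); exact: box_sum_le.
Qed.

Lemma l1_add u v : l1_summable u -> l1_summable v -> l1_summable (fun y => u y + v y).
Proof.
case=> M HM [N HN]; exists (M + N) => n; apply: le_trans (lerD (HM n) (HN n)).
rewrite -box_sumD; apply: box_sum_le => y; exact: ler_normD.
Qed.

Lemma l1_scale (c : R) u : l1_summable u -> l1_summable (fun y => c * u y).
Proof.
case=> M HM; exists (`|c| * M) => n.
have -> : box_sum n (fun y => `|c * u y|) = box_sum n (fun y => `|c| * `|u y|).
  by apply: box_sum_ext => y; rewrite normrM.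
by rewrite (box_sumZ n `|c| (fun y => `|u y|)) ler_wpM2l.
Qed.

Lemma l1_opp u : l1_summable u -> l1_summable (fun y => - u y).
Proof. by move=> H; apply: (l1_le H) => y; rewrite normrN. Qed.

Lemma l1_sub u v : l1_summable u -> l1_summable v -> l1_summable (fun y => u y - v y).
Proof. by move=> Hu Hv; apply: (l1_add Hu (l1_opp Hv)). Qed.

Lemma l1_mulr u g G : l1_summable u -> (forall y, `|g y| <= G) ->
  l1_summable (fun y => u y * g y).
Proof.
move=> Hu Hg.
have G0p : 0 <= G by apply: le_trans (Hg 0).
apply: (l1_le (l1_scale G Hu)) => y.
rewrite normrM [X in _ <= X]normrM (ger0_norm G0p) mulrC.
by apply: ler_wpM2r => //; exact: Hg.
Qed.

Lemma l1_mull u g G : l1_summable u -> (forall y, `|g y| <= G) ->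
  l1_summable (fun y => g y * u y).
Proof. by move=> Hu Hg; under eq_fun do rewrite mulrC; exact: (l1_mulr Hu Hg). Qed.

Lemma l1_abs u : l1_summable u -> l1_summable (fun y => `|u y|).
Proof. by move=> H; apply: (l1_le H) => y; rewrite normr_id. Qed.


Lemma l1_pt (c : R) y : l1_summable (fun z => c * (z == y)%:R).
Proof.
exists `|c| => n.
have E : (fun z => `|c * (z == y)%:R|) = (fun z => `|c| * (z == y)%:R).
  by apply: funext => z; rewrite normrM; case: (z == y); rewrite ?normr1 ?normr0.
rewrite E (box_sum_pt n (fun z => `|c|) y).
by case: (norminf y <= n)%N; rewrite ?mulr1 ?mulr0.
Qed.

Lemma l1_big (I : Type) (r : seq I) (F : I -> ZD D -> R) :
  (forall i, l1_summable (F i)) -> l1_summable (fun z => \sum_(i <- r) F i z).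
Proof.
move=> H; elim: r => [|i r IH].
  by exists 0 => n; rewrite /box_sum big1 // => j _; rewrite big_nil normr0.
under eq_fun do rewrite big_cons; exact: l1_add.
Qed.

Lemma lsumD u v : l1_summable u -> l1_summable v ->
  lsum (fun y => u y + v y) = lsum u + lsum v.
Proof.
move=> Hu Hv; apply: lsum_cvg_eq.
under eq_fun do rewrite box_sumD.
exact: cvgD (l1_cvg Hu) (l1_cvg Hv).
Qed.

Lemma lsumB u v : l1_summable u -> l1_summable v ->
  lsum (fun y => u y - v y) = lsum u - lsum v.
Proof.
move=> Hu Hv; apply: lsum_cvg_eq.
under eq_fun do rewrite box_sumB.
exact: cvgB (l1_cvg Hu) (l1_cvg Hv).
Qed.

Lemma lsumZ (c : R) u : l1_summable u -> lsum (fun y => c * u y) = c * lsum u.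
Proof.
move=> Hu; apply: lsum_cvg_eq.
under eq_fun do rewrite box_sumZ.
exact: cvgMr (l1_cvg Hu).
Qed.

Lemma lsumZr (c : R) u : l1_summable u -> lsum (fun y => u y * c) = lsum u * c.
Proof.
move=> Hu; apply: lsum_cvg_eq.
under eq_fun do rewrite box_sumZr.
exact: cvgMl (l1_cvg Hu).
Qed.

Lemma lsum_ext u v : u =1 v -> lsum u = lsum v.
Proof. by move=> /funext ->. Qed.

Lemma lsum_le u M : l1_summable u -> (forall n, box_sum n u <= M) -> lsum u <= M.
Proof.
move=> Hu HM; rewrite /lsum; apply: limr_le; first exact: l1_cvg.
by apply: nearW.
Qed.

Lemma lsum_ge u M : l1_summable u -> (forall n, M <= box_sum n u) -> M <= lsum u.
Proof.
move=> Hu HM; rewrite /lsum; apply: limr_ge; first exact: l1_cvg.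
by apply: nearW.
Qed.

Lemma lsum_norm u : l1_summable u -> `|lsum u| <= lsum (fun y => `|u y|).
Proof.
move=> Hu; have Ha := l1_abs Hu.
have C : (fun n => `|box_sum n u|) @ \oo --> `|lsum u| by apply: cvg_norm; exact: l1_cvg.
rewrite -(cvg_lim (@Rhausdorff R) C); apply: ler_lim.
- by apply/cvg_ex; exists `|lsum u|.
- exact: l1_cvg.
- by apply: nearW => n; exact: box_sum_norm.
Qed.

Lemma lsum_eventually u N K : (forall n, (N <= n)%N -> box_sum n u = K) -> lsum u = K.
Proof.
move=> H; apply: lsum_cvg_eq; apply: cvg_near_cst.
by exists N => // n /= Hn; exact: H.
Qed.

Lemma lsum_pt (c : ZD D -> R) y : lsum (fun z => c z * (z == y)%:R) = c y.
Proof.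
apply: (@lsum_eventually _ (norminf y)) => n Hn.
by rewrite box_sum_pt Hn mulr1.
Qed.

Lemma lsum_box u k : (forall y, (k < norminf y)%N -> u y = 0) -> lsum u = box_sum k u.
Proof.
move=> H; apply: (@lsum_eventually _ k) => n Hn.
rewrite (box_sum_mono u Hn); apply: box_sum_ext => y.
case: leqP => Hy; first by rewrite mulr1.
by rewrite H // mul0r.
Qed.

Lemma lsum_big (I : Type) (r : seq I) (F : I -> ZD D -> R) :
  (forall i, l1_summable (F i)) ->
  lsum (fun z => \sum_(i <- r) F i z) = \sum_(i <- r) lsum (F i).
Proof.
move=> H; elim: r => [|i r IH].
  rewrite big_nil; under eq_fun do rewrite big_nil.
  by apply: (@lsum_eventually _ 0) => n _; rewrite /box_sum big1.
rewrite big_cons; under eq_fun do rewrite big_cons.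
by rewrite lsumD ?IH //; exact: l1_big.
Qed.

Lemma box_le_lsum w n : (forall y, 0 <= w y) -> l1_summable w -> box_sum n w <= lsum w.
Proof.
move=> H Hw; rewrite /lsum; apply: limr_ge; first exact: l1_cvg.
by exists n => // m /= Hm; exact: box_sum_nondec.
Qed.

Lemma box_tail w k m : (k <= m)%N ->
  box_sum m (fun y => w y * (k < norminf y)%N%:R) = box_sum m w - box_sum k w.
Proof.
move=> Hkm; rewrite (box_sum_mono w Hkm) -box_sumB; apply: box_sum_ext => y.
by case: leqP; rewrite ?mulr1 ?mulr0 ?subr0 ?subrr.
Qed.

End L1.

Section Seq.
Variable (R : realType).

Lemma lim_le_ev (v : nat -> R) l e N : v @ \oo --> l ->
  (forall m, (N <= m)%N -> v m <= e) -> l <= e.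
Proof.
move=> Hv H; rewrite -(cvg_lim (@Rhausdorff R) Hv); apply: limr_le.
  by apply/cvg_ex; exists l.
by exists N => // m /= Hm; exact: H.
Qed.

Lemma cvg_close (a b e : nat -> R) (l : R) : a @ \oo --> l -> e @ \oo --> (0 : R) ->
  (forall n, `|b n - a n| <= e n) -> b @ \oo --> l.
Proof.
move=> Ha He Hb.
have H0 : (fun n => b n - a n) @ \oo --> (0 : R).
  apply/cvgr0Pnorm_le => eps heps.
  have := @cvgr0_norm_le _ _ _ _ _ e He _ heps.
  case=> N _ HN; exists N => // n /= Hn.
  exact: le_trans (Hb n) (le_trans (ler_norm _) (HN n Hn)).
have -> : b = (fun n => a n + (b n - a n)) by apply: funext => n; rewrite addrC subrK.
by rewrite -[l]addr0; apply: cvgD.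
Qed.

Lemma cvg_bigsum (I : Type) (r : seq I) (F : I -> nat -> R) (l : I -> R) :
  (forall i, F i @ \oo --> l i) ->
  (fun n => \sum_(i <- r) F i n) @ \oo --> \sum_(i <- r) l i.
Proof.
move=> H; elim: r => [|i r IH].
  rewrite big_nil; under eq_fun do rewrite big_nil; exact: cvg_cst.
rewrite big_cons; under eq_fun do rewrite big_cons; exact: cvgD.
Qed.

End Seq.

Section Shift.
Variables (R : realType) (D : nat).
Implicit Types (u v w : ZD D -> R) (x y z : ZD D).

Lemma l1_shift u c : l1_summable u -> l1_summable (fun y => u (y + c)).
Proof.
case=> M HM; exists M => n.
rewrite (@box_sum_shift R D n (n + norminf c) c (fun y => `|u y|) (leqnn _)).
apply: le_trans (HM (n + norminf c)%N); apply: box_sum_le => y.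
by case: (_ <= _)%N; rewrite ?mulr1 ?mulr0.
Qed.

Lemma lsum_shift u c : l1_summable u -> lsum (fun y => u (y + c)) = lsum u.
Proof.
move=> Hu; apply: lsum_cvg_eq.
set w := fun y => `|u y|.
have Hw : l1_summable w by exact: l1_abs.
have w0 y : 0 <= w y by rewrite /w normr_ge0.
set k := norminf c.
have Bound n : (k <= n)%N -> `|lsum u - box_sum n (fun y => u (y + c))| <= lsum w - box_sum (n - k) w.
  move=> Hkn; rewrite distrC; apply: (@lim_le_ev _ (fun m => `|box_sum n (fun y => u (y + c)) - box_sum m u|) _ _ (n + k)).
    by apply: cvg_norm; apply: cvgB; [exact: cvg_cst | exact: l1_cvg].
  move=> m Hm; rewrite (box_sum_shift u Hm) -box_sumB.
  apply: le_trans (box_sum_norm _ _) _.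
  apply: le_trans (_ : _ <= box_sum m (fun y => w y * (n - k < norminf y)%N%:R)) _.
    apply: box_sum_le => y.
    case: (boolP (norminf (y - c) <= n)%N) => Hy.
      by rewrite mulr1 subrr normr0 mulr_ge0.
    have Hlt : (n - k < norminf y)%N.
      have H1 := norminfD y (- c); rewrite norminfN -/k in H1.
      move: Hy H1 Hkn; rewrite -ltnNge; move: (norminf (y - c)) (norminf y) => a b.
      lia.
    by rewrite Hlt mulr0 sub0r normrN mulr1.
  rewrite box_tail; last lia.
  by rewrite lerD2r; exact: box_le_lsum.
have Cw := l1_cvg Hw.
apply/cvgrPdist_le => eps heps.
move/cvgrPdist_le: Cw => /(_ eps heps).
case=> N _ HN; exists (N + k)%N => // n /= Hn.
apply: le_trans (Bound n _) _; first lia; apply: le_trans (ler_norm _) _.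
by apply: HN => /=; lia.
Qed.

End Shift.

Section Fubini.
Variables (R : realType) (D : nat).
Implicit Types (u v w : ZD D -> R) (x y z : ZD D).

Lemma lsum_iter (F : ZD D -> ZD D -> R) M :
  (forall n, box_sum n (fun x => box_sum n (fun y => `|F x y|)) <= M) ->
  (fun n => box_sum n (fun x => box_sum n (F x))) @ \oo --> lsum (fun x => lsum (F x)).
Proof.
move=> HM.
pose Q n := box_sum n (fun x => box_sum n (fun y => `|F x y|)).
have inner0 k x : 0 <= box_sum k (fun y => `|F x y|) by apply: box_sum_ge0.
have Qmono : {homo Q : n m / (n <= m)%N >-> n <= m}.
  move=> n m Hnm; apply: (@le_trans _ _ (box_sum n (fun x => box_sum m (fun y => `|F x y|)))).
    by apply: box_sum_le => x; apply: box_sum_nondec.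
  exact: (box_sum_nondec (w := fun x => box_sum m (fun y => `|F x y|))).
have QC : cvgn Q.
  by apply: nondecreasing_is_cvgn => //; exists M => _ [n _ <-]; exact: HM.
set Qi := limn Q.
have QQi n : Q n <= Qi by exact: nondecreasing_cvgn_le.
have Frow x : l1_summable (F x).
  exists M => k; set K := maxn k (norminf x).
  apply: (@le_trans _ _ (box_sum K (fun y => `|F x y|))).
    by apply: box_sum_nondec => //; rewrite leq_maxl.
  apply: le_trans (HM K).
  apply: (@box_sum_term R D K (fun x' => box_sum K (fun y => `|F x' y|)) x) => //.
  by rewrite leq_maxr.
pose I x := lsum (F x).
have Est n : box_sum n (fun x => `|I x - box_sum n (F x)|) <= Qi - Q n.
  apply: (@lim_le_ev _ (fun k => box_sum n (fun x => `|box_sum k (F x) - box_sum n (F x)|)) _ _ n).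
    apply: cvg_bigsum => j; apply: cvg_norm; apply: cvgB; [exact: l1_cvg | exact: cvg_cst].
  move=> k Hk.
  apply: (@le_trans _ _ (box_sum n (fun x => box_sum k (fun y => `|F x y|) - box_sum n (fun y => `|F x y|)))).
    apply: box_sum_le => x.
    rewrite -!box_tail //.
    apply: le_trans (box_sum_norm _ _) _; apply: box_sum_le => y.
    by rewrite normrM normr_nat.
  rewrite box_sumB lerD2r; apply: (le_trans _ (QQi k)).
  exact: (box_sum_nondec (w := fun x => box_sum k (fun y => `|F x y|)) (inner0 k) Hk).
have HI : l1_summable I.
  exists Qi => n; apply: (@le_trans _ _ (box_sum n (fun x => `|I x - box_sum n (F x)|) + Q n)).
    rewrite /Q -box_sumD; apply: box_sum_le => x.
    apply: le_trans (_ : _ <= `|I x - box_sum n (F x)| + `|box_sum n (F x)|) _.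
      by rewrite -[X in `|X|](subrK (box_sum n (F x))) ler_normD.
    by rewrite lerD2l box_sum_norm.
  by have := Est n; lra.
have E0 : (fun n => Qi - Q n) @ \oo --> (0 : R).
  by rewrite -(subrr Qi); apply: cvgB => //; exact: cvg_cst.
apply: (cvg_close (l1_cvg HI) E0) => n.
rewrite distrC -box_sumB; apply: le_trans (box_sum_norm _ _) _.
exact: Est.
Qed.

Lemma lsum_fubini (F : ZD D -> ZD D -> R) M :
  (forall n, box_sum n (fun x => box_sum n (fun y => `|F x y|)) <= M) ->
  lsum (fun x => lsum (F x)) = lsum (fun y => lsum (fun x => F x y)).
Proof.
move=> HM.
have HM' n : box_sum n (fun y => box_sum n (fun x => `|F x y|)) <= M.
  by rewrite /box_sum exchange_big; exact: HM.
have C1 := lsum_iter HM.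
have C2 := lsum_iter HM'.
have E : (fun n => box_sum n (fun y => box_sum n (fun x => F x y))) =
         (fun n => box_sum n (fun x => box_sum n (F x))).
  by apply: funext => n; rewrite /box_sum exchange_big.
rewrite E in C2.
by rewrite -(cvg_lim (@Rhausdorff R) C1) -(cvg_lim (@Rhausdorff R) C2).
Qed.

End Fubini.

Section Bounds.
Variables (R : realType) (D : nat).
Implicit Types (u v w : ZD D -> R) (x y z : ZD D).

Lemma box_shift_le u c M : (forall m, box_sum m (fun y => `|u y|) <= M) ->
  forall n, box_sum n (fun y => `|u (y + c)|) <= M.
Proof.
move=> HM n.
rewrite (@box_sum_shift R D n (n + norminf c) c (fun y => `|u y|) (leqnn _)).
apply: le_trans (HM (n + norminf c)%N); apply: box_sum_le => y.
by case: (_ <= _)%N; rewrite ?mulr1 ?mulr0.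
Qed.

Lemma l1_boundM u : l1_summable u ->
  exists M, [/\ 0 <= M, (forall n, box_sum n (fun y => `|u y|) <= M) &
                        forall y, `|u y| <= M].
Proof.
case=> M HM; exists M; split => //.
- by apply: le_trans (HM 0%N); apply: box_sum_ge0.
- move=> y; apply: le_trans (HM (norminf y)).
  by apply: (@box_sum_term _ _ _ (fun z => `|u z|)).
Qed.

End Bounds.

Section Rep.
Variables (R : realType) (D : nat) (T : ZD D -> R -> R).
Hypothesis HT : pre_scale_space_family T.
Implicit Types (f g u v w : ZD D -> R) (x y z : ZD D).

Notation L f := (pre_ss_rep T f).

Lemma T_l1 s : 0 <= s -> l1_summable (fun x => T x s).
Proof. by case: HT => H _ _ _; exact: H. Qed.

Lemma T0 x : T x 0 = (x == 0)%:R.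
Proof. by case: HT => _ H _ _; rewrite H. Qed.

Lemma Tsg s1 s2 x : 0 <= s1 -> 0 <= s2 ->
  lsum (fun xi => T xi s1 * T (x - xi) s2) = T x (s1 + s2).
Proof. by case: HT => _ _ H _; exact: H. Qed.

Lemma Lterm_l1 f x s : l1_summable f -> 0 <= s ->
  l1_summable (fun xi => T xi s * f (x - xi)).
Proof.
move=> Hf Hs; have [G [_ _ HG]] := l1_boundM Hf.
exact: (l1_mulr (T_l1 Hs) (fun y => HG (x - y))).
Qed.

Lemma L_add f g x s : l1_summable f -> l1_summable g -> 0 <= s ->
  L (fun y => f y + g y) x s = L f x s + L g x s.
Proof.
move=> Hf Hg Hs; rewrite /pre_ss_rep -lsumD; try exact: Lterm_l1.
by apply: lsum_ext => xi; rewrite mulrDr.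
Qed.

Lemma L_sub f g x s : l1_summable f -> l1_summable g -> 0 <= s ->
  L (fun y => f y - g y) x s = L f x s - L g x s.
Proof.
move=> Hf Hg Hs; rewrite /pre_ss_rep -lsumB; try exact: Lterm_l1.
by apply: lsum_ext => xi; rewrite mulrBr.
Qed.

Lemma L_scale (c : R) f x s : l1_summable f -> 0 <= s ->
  L (fun y => c * f y) x s = c * L f x s.
Proof.
move=> Hf Hs; rewrite /pre_ss_rep -lsumZ; last exact: Lterm_l1.
by apply: lsum_ext => xi; rewrite mulrCA.
Qed.

Lemma L_big (I : Type) (r : seq I) (F : I -> ZD D -> R) x s :
  (forall i, l1_summable (F i)) -> 0 <= s ->
  L (fun y => \sum_(i <- r) F i y) x s = \sum_(i <- r) L (F i) x s.
Proof.
move=> HF Hs; rewrite /pre_ss_rep -lsum_big; last by move=> i; exact: Lterm_l1.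
by apply: lsum_ext => xi; rewrite mulr_sumr.
Qed.

Lemma L_at0 f x : L f x 0 = f x.
Proof.
rewrite /pre_ss_rep.
rewrite (lsum_ext (v := fun xi => f (x - xi) * (xi == 0)%:R)).
  by rewrite lsum_pt subr0.
by move=> xi; rewrite T0 mulrC.
Qed.

Lemma L_pt (c : R) p x s :
  L (fun y => c * (y == p)%:R) x s = c * T (x - p) s.
Proof.
rewrite /pre_ss_rep.
rewrite (lsum_ext (v := fun xi => (c * T xi s) * (xi == x - p)%:R)).
  by rewrite lsum_pt.
move=> xi; have -> : (x - xi == p) = (xi == x - p).
  by apply/eqP/eqP => [<-|->]; rewrite opprB addrC subrK.
by rewrite mulrCA mulrA.
Qed.

Lemma L_bound f s : l1_summable f -> 0 <= s -> exists K, forall x, `|L f x s| <= K.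
Proof.
move=> Hf Hs; have [G [G0 _ HG]] := l1_boundM Hf.
have [MT [MT0 HMT _]] := l1_boundM (T_l1 Hs).
exists (MT * G) => x; rewrite /pre_ss_rep.
apply: le_trans (lsum_norm (Lterm_l1 x Hf Hs)) _.
apply: lsum_le; first exact: l1_abs (Lterm_l1 x Hf Hs).
move=> n; apply: le_trans (_ : _ <= box_sum n (fun xi => `|T xi s| * G)) _.
  by apply: box_sum_le => xi; rewrite normrM ler_wpM2l.
by rewrite box_sumZr ler_wpM2r.
Qed.

Lemma L_l1 f s : l1_summable f -> 0 <= s -> l1_summable (fun x => L f x s).
Proof.
move=> Hf Hs; have [G [G0 HGn HG]] := l1_boundM Hf.
have [MT [MT0 HMT _]] := l1_boundM (T_l1 Hs).
exists (MT * G) => n.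
apply: le_trans (_ : _ <= box_sum n (fun x => lsum (fun xi => `|T xi s * f (x - xi)|))) _.
  by apply: box_sum_le => x; apply: lsum_norm; exact: Lterm_l1.
rewrite /box_sum -lsum_big; last by move=> j; apply: l1_abs; exact: Lterm_l1.
have Hsh xi : box_sum n (fun y => `|f (y - xi)|) <= G.
  exact: (@box_shift_le R D f (- xi) G HGn n).
rewrite (lsum_ext (v := fun xi => `|T xi s| * box_sum n (fun y => `|f (y - xi)|))); last first.
  by move=> xi; rewrite /box_sum mulr_sumr; apply: eq_bigr => j _; rewrite normrM.
apply: lsum_le.
  apply: (@l1_mulr _ _ (fun xi => `|T xi s|) (fun xi => box_sum n (fun y => `|f (y - xi)|)) G).
    exact: l1_abs (T_l1 Hs).
  by move=> xi; rewrite ger0_norm ?Hsh //; apply: box_sum_ge0.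
move=> m; apply: le_trans (_ : _ <= box_sum m (fun xi => `|T xi s| * G)) _.
  by apply: box_sum_le => xi; rewrite ler_wpM2l.
by rewrite box_sumZr ler_wpM2r.
Qed.



Lemma L_transport f x s t : l1_summable f -> 0 <= s -> 0 <= t ->
  L f x (t + s) = L (fun y => L f y s) x t.
Proof.
move=> Hf Hs Ht.
have [Gf [Gf0 _ HGf]] := l1_boundM Hf.
have [Mt [Mt0 HMt HGt]] := l1_boundM (T_l1 Ht).
have [Ms [Ms0 HMs HGs]] := l1_boundM (T_l1 Hs).
rewrite /pre_ss_rep.
pose F0 := fun xi eta => T eta t * T (xi - eta) s * f (x - xi).
transitivity (lsum (fun xi => lsum (F0 xi))).
  apply: lsum_ext => xi; rewrite /F0 -(Tsg xi Ht Hs) -lsumZr //.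
  exact: (l1_mulr (T_l1 Ht) (fun eta => HGs (xi - eta))).
have Hb n : box_sum n (fun xi => box_sum n (fun eta => `|F0 xi eta|)) <= Gf * (Mt * Ms).
  apply: le_trans (_ : _ <= box_sum n (fun xi => box_sum n (fun eta => Gf * (`|T eta t| * `|T (xi - eta) s|)))) _.
    apply: box_sum_le => xi; apply: box_sum_le => eta.
    rewrite /F0 !normrM mulrC; apply: ler_wpM2r => //.
  rewrite /box_sum /= exchange_big /=.
  under eq_bigr do rewrite -mulr_sumr.
  rewrite -mulr_sumr; apply: ler_wpM2l => //.
  apply: le_trans (_ : _ <= \sum_(j : 'rV['I_(2 * n + 1)]_D) `|T (phi j) t| * Ms) _.
    apply: ler_sum => j _; rewrite -mulr_sumr; apply: ler_wpM2l => //.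
    exact: (@box_shift_le R D (fun y => T y s) (- phi j) Ms HMs n).
  by rewrite -mulr_suml; apply: ler_wpM2r => //; exact: HMt.
rewrite (lsum_fubini Hb).
apply: lsum_ext => eta; rewrite /F0.
have Hl : l1_summable (fun xi => T (xi - eta) s * f (x - xi)).
  exact: (l1_mulr (l1_shift (- eta) (T_l1 Hs)) (fun xi => HGf (x - xi))).
rewrite (lsum_ext (v := fun xi => T eta t * (T (xi - eta) s * f (x - xi)))); last first.
  by move=> xi; rewrite mulrA.
rewrite lsumZ //; congr (_ * _).
rewrite -(lsum_shift eta Hl); apply: lsum_ext => zeta.
by rewrite addrK opprD addrA addrAC.
Qed.

End Rep.

Section Gen.
Variable R : realType.

Lemma cvg_bigsumF (U : Type) (G : set_system U) (FG : Filter G)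
   (I : Type) (r : seq I) (F : I -> U -> R) (l : I -> R) :
  (forall i, F i @ G --> l i) ->
  (fun n => \sum_(i <- r) F i n) @ G --> \sum_(i <- r) l i.
Proof.
move=> H; elim: r => [|i r IH].
  rewrite big_nil; under eq_fun do rewrite big_nil; exact: cvg_cst.
rewrite big_cons; under eq_fun do rewrite big_cons; exact: cvgD.
Qed.

Lemma within_transfer (f g : R -> R) (A B : set R) (d : R) :
  (\forall h \near (0 : R), A h -> B h /\ f h = g h) ->
  g @ within B (nbhs (0 : R)) --> d -> f @ within A (nbhs (0 : R)) --> d.
Proof.
move=> H Hg P /Hg HP.
rewrite /within /= in HP *.
apply: filterS2 H HP => h H1 H2 Ah.
have [Bh E] := H1 Ah; move: (H2 Bh); rewrite /preimage /= E. by [].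
Qed.

Lemma sderiv_right D (Lf : ZD D -> R -> R) x s0 d : 0 <= s0 ->
  has_sderiv Lf x s0 d ->
  (fun h => (Lf x (s0 + h) - Lf x s0) / h) @ 0^'+ --> d.
Proof.
move=> Hs0 H.
have HN0 : \forall h \near (0 : R), (fun h => 0 < h) h ->
    [set h | h != 0 /\ 0 <= s0 + h] h /\
    (fun h => (Lf x (s0 + h) - Lf x s0) / h) h = (fun h => (Lf x (s0 + h) - Lf x s0) / h) h.
  exists 1; first exact: ltr01.
  move=> h _ /= h0; split => //; split; first by rewrite gt_eqF.
  by rewrite addr_ge0 // ltW.
exact: (within_transfer HN0 H).
Qed.

Lemma right_unique (q : R -> R) (d1 d2 : R) : q @ 0^'+ --> d1 -> q @ 0^'+ --> d2 -> d1 = d2.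
Proof.
by move=> H1 H2; rewrite -(cvg_lim (@Rhausdorff R) H1) -(cvg_lim (@Rhausdorff R) H2).
Qed.

Lemma near0_ball (P : R -> Prop) e : 0 < e -> (forall h, `|h| < e -> P h) ->
  \forall h \near (0 : R), P h.
Proof.
move=> e0 H; exists e => // h /=; rewrite sub0r normrN; exact: H.
Qed.

Lemma at_right_ex (P : R -> Prop) : (\forall h \near 0^'+, P h) ->
  exists2 e, 0 < e & forall h, 0 < h -> h < e -> P h.
Proof.
case=> e /= e0 He; exists e => // h h0 he; apply: He => //=.
by rewrite sub0r normrN gtr0_norm.
Qed.

End Gen.

Section SS.
Variables (R : realType) (D : nat) (T : ZD D -> R -> R).
Hypothesis HS : scale_space_family T.

Notation L f := (pre_ss_rep T f).

Let HT : pre_scale_space_family T := HS.1.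

Lemma Lpt1 p y s : L (fun z => 1 * (z == p)%:R) y s = T (y - p) s.
Proof. by rewrite (L_pt T) mul1r. Qed.

Lemma Ld0_0 y : L (fun z => 1 * (z == 0)%:R) y 0 = (y == 0)%:R.
Proof. by rewrite Lpt1 subr0 (T0 HT). Qed.

Lemma norminf1_neq0 (y : ZD D) : norminf y = 1%N -> y != 0.
Proof. by move=> H; rewrite -norminf_eq0 H. Qed.

Definition Aco (z : ZD D) : R := lim ((fun h => (T z h - T z 0) / h) @ 0^'+).

Lemma quot_d0 z : (fun h => (L (fun y => 1 * (y == 0)%:R) z (0 + h) - L (fun y => 1 * (y == 0)%:R) z 0) / h)
   = (fun h => (T z h - T z 0) / h).
Proof. by apply: funext => h; rewrite !Lpt1 !subr0 add0r. Qed.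

Lemma Aco_cvg_of z d : has_sderiv (L (fun y => 1 * (y == 0)%:R)) z 0 d ->
  (fun h => (T z h - T z 0) / h) @ 0^'+ --> d /\ Aco z = d.
Proof.
move=> H; have := sderiv_right (lexx 0) H; rewrite quot_d0 => C.
by split => //; rewrite /Aco (cvg_lim (@Rhausdorff R) C).
Qed.

Let Hd0 : l1_summable (fun y : ZD D => (1 : R) * (y == 0)%:R) := l1_pt (1 : R) 0.

Lemma Aco_cvg z : (fun h => (T z h - T z 0) / h) @ 0^'+ --> Aco z.
Proof.
case: (eqVneq z 0) => [->|Hz].
  have [Pmax _] := HS.2 _ Hd0 0 (lexx 0) 0.
  have [d Hd _] : exists2 d, has_sderiv (L (fun y => 1 * (y == 0)%:R)) 0 0 d & d <= 0.
    apply: Pmax => y; rewrite subr0 => Hy.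
    by rewrite !Ld0_0 (negbTE (norminf1_neq0 Hy)) eqxx ler01.
  by have [C ->] := Aco_cvg_of Hd.
have [_ Pmin] := HS.2 _ Hd0 0 (lexx 0) z.
have [d Hd _] : exists2 d, has_sderiv (L (fun y => 1 * (y == 0)%:R)) z 0 d & 0 <= d.
  apply: Pmin => y Hy.
  by rewrite !Ld0_0 (negbTE Hz) ler0n.
by have [C ->] := Aco_cvg_of Hd.
Qed.

Definition aco (xi : ZD D) : R := Aco (- xi).

Lemma aco_out xi : (1 < norminf xi)%N -> aco xi = 0.
Proof.
move=> Hxi; rewrite /aco; set z := - xi.
have Hz : (1 < norminf z)%N by rewrite /z norminfN.
have Hz0 : z != 0 by rewrite -norminf_eq0; move: Hz; case: (norminf z).
have [Pmax Pmin] := HS.2 _ Hd0 0 (lexx 0) z.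
have Hy0 y : norminf (y - z) = 1%N -> y != 0.
  by move=> Hy; apply/eqP => E; move: Hy; rewrite E sub0r norminfN => E1; move: Hz; rewrite E1.
have [d1 Hd1 d1le] : exists2 d, has_sderiv (L (fun y => 1 * (y == 0)%:R)) z 0 d & d <= 0.
  apply: Pmax => y Hy.
  by rewrite !Ld0_0 (negbTE (Hy0 _ Hy)) (negbTE Hz0).
have [d2 Hd2 d2ge] : exists2 d, has_sderiv (L (fun y => 1 * (y == 0)%:R)) z 0 d & 0 <= d.
  apply: Pmin => y Hy.
  by rewrite !Ld0_0 (negbTE Hz0) ler0n.
have [_ E1] := Aco_cvg_of Hd1.
have [_ E2] := Aco_cvg_of Hd2.
by apply/eqP; rewrite eq_le E1 d1le -E1 E2 d2ge.
Qed.

Lemma aco_pos xi : xi != 0 -> 0 <= aco xi.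
Proof.
move=> Hxi; rewrite /aco; set z := - xi.
have Hz0 : z != 0 by rewrite /z oppr_eq0.
have [_ Pmin] := HS.2 _ Hd0 0 (lexx 0) z.
have [d2 Hd2 d2ge] : exists2 d, has_sderiv (L (fun y => 1 * (y == 0)%:R)) z 0 d & 0 <= d.
  apply: Pmin => y Hy.
  by rewrite !Ld0_0 (negbTE Hz0) ler0n.
by have [_ ->] := Aco_cvg_of Hd2.
Qed.


Lemma ext_zero_deriv g x : l1_summable g ->
  (forall y, norminf (y - x) = 1%N -> g y = g x) ->
  (fun h => (L g x h - L g x 0) / h) @ 0^'+ --> (0 : R).
Proof.
move=> Hg Hloc.
have [Pmax Pmin] := HS.2 _ Hg 0 (lexx 0) x.
have [d1 Hd1 d1le] : exists2 d, has_sderiv (L g) x 0 d & d <= 0.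
  by apply: Pmax => y Hy; rewrite !(L_at0 HT) Hloc.
have [d2 Hd2 d2ge] : exists2 d, has_sderiv (L g) x 0 d & 0 <= d.
  by apply: Pmin => y Hy; rewrite !(L_at0 HT) Hloc.
have C1 := sderiv_right (lexx 0) Hd1.
have C2 := sderiv_right (lexx 0) Hd2.
have E := right_unique C1 C2.
have E0 : d1 = 0 by apply/eqP; rewrite eq_le d1le E d2ge.
move: C1; rewrite E0; set q := (fun h => _ / h); have -> : q = (fun h => (L g x h - L g x 0) / h).
  by apply: funext => h; rewrite /q add0r.
by [].
Qed.

Lemma deriv0 g x : l1_summable g ->
  (fun h => (L g x h - g x) / h) @ 0^'+ --> box_sum 1 (fun xi => aco xi * g (x + xi)).
Proof.
move=> Hg.
pose gin := fun y => \sum_(j : 'rV['I_(2 * 1 + 1)]_D) g (x + phi j) * (y == x + phi j)%:R.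
have Hgin : l1_summable gin.
  by apply: l1_big => j; exact: l1_pt.
have ginE y : (norminf (y - x) <= 1)%N -> gin y = g y.
  move=> Hy; rewrite /gin.
  transitivity (box_sum 1 (fun xi => g (x + xi) * (xi == y - x)%:R)).
    apply: eq_bigr => j _.
    have -> : (y == x + phi j) = (phi j == y - x).
      by apply/eqP/eqP => [->|->]; [rewrite addrAC subrr add0r | rewrite addrC subrK].
    by [].
  by rewrite box_sum_pt Hy mulr1 addrC subrK.
pose gout := fun y => g y - gin y.
have Hgout : l1_summable gout by exact: l1_sub.
have gsplit y : g y = gin y + gout y by rewrite /gout addrC subrK.
have Lsplit h : 0 <= h -> L g x h = L gin x h + L gout x h.
  move=> h0; rewrite -(L_add HT) //; congr (pre_ss_rep T _ x h).
  by apply: funext => y; rewrite gsplit.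
have LinE h : 0 <= h -> L gin x h = \sum_(j : 'rV['I_(2 * 1 + 1)]_D) g (x + phi j) * T (- phi j) h.
  move=> h0; rewrite /gin (L_big HT) //; last by move=> j; exact: l1_pt.
  apply: eq_bigr => j _; rewrite (L_pt T).
  by rewrite opprD addrA subrr add0r.
have Cout : (fun h => (L gout x h - L gout x 0) / h) @ 0^'+ --> (0 : R).
  apply: ext_zero_deriv => // y Hy.
  rewrite /gout !ginE ?subrr // ?Hy //.
  by rewrite norminf0.
have Cin : (fun h => \sum_(j : 'rV['I_(2 * 1 + 1)]_D) g (x + phi j) * ((T (- phi j) h - T (- phi j) 0) / h))
    @ 0^'+ --> box_sum 1 (fun xi => aco xi * g (x + xi)).
  rewrite /box_sum; apply: cvg_bigsumF => j.
  rewrite mulrC; apply: cvgMr; exact: Aco_cvg.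
have HN0 : \forall h \near (0 : R), (fun h => 0 < h) h ->
   (fun h => 0 < h) h /\
   (fun h => (L g x h - g x) / h) h =
   (fun h => \sum_(j : 'rV['I_(2 * 1 + 1)]_D) g (x + phi j) * ((T (- phi j) h - T (- phi j) 0) / h)
             + (L gout x h - L gout x 0) / h) h.
  exists 1; first exact: ltr01.
  move=> h _ /= h0; split => //.
  rewrite -{1}(L_at0 HT g x) (Lsplit h (ltW h0)) (Lsplit 0 (lexx 0)).
  have E1 := LinE h (ltW h0); have E2 := LinE 0 (lexx 0); rewrite E1 E2.
  rewrite opprD addrACA mulrDl; congr (_ + _).
  symmetry; under eq_bigr do rewrite mulrA mulrBr.
  by rewrite -mulr_suml sumrB.
have C : (fun h => \sum_(j : 'rV['I_(2 * 1 + 1)]_D) g (x + phi j) * ((T (- phi j) h - T (- phi j) 0) / h)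
             + (L gout x h - L gout x 0) / h) @ 0^'+ --> box_sum 1 (fun xi => aco xi * g (x + xi)) + 0.
  exact: cvgD Cin Cout.
rewrite addr0 in C.
exact: (within_transfer HN0 C).
Qed.

End SS.

Lemma quot_lin (R : realType) (p p' q q' M h : R) :
  ((p - M * q) - (p' - M * q')) / h = (p - p') / h - M * ((q - q') / h).
Proof. by rewrite mulrA -mulrBl; congr (_ * _); ring. Qed.

Section Main.
Variables (R : realType) (D : nat) (T : ZD D -> R -> R).
Hypothesis HS : scale_space_family T.

Notation L f := (pre_ss_rep T f).

Let HT : pre_scale_space_family T := HS.1.

Lemma T_gap : exists2 e : R, 0 < e & forall s, 0 < s -> s < e ->
  3 / 4 <= T 0 s /\ forall z, z != 0 -> T z s <= 1 / 4.
Proof.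
case: HT => Hl1 _ _ Hc.
have q0 : (0 : R) < 1 / 4 by rewrite divr_gt0 // ltr0n.
move/cvgrPdist_le: Hc => /(_ _ q0) /at_right_ex [e e0 He].
exists e => // s s0 se.
have Hs := He s s0 se; rewrite sub0r normrN in Hs.
have Hw : l1_summable (fun x => `|T x s - ddelta R x|).
  apply: l1_abs; apply: l1_sub; first exact: Hl1 (ltW s0).
  by apply: (l1_le (l1_pt (1 : R) 0)) => y; rewrite mul1r.
have Bz z : `|T z s - ddelta R z| <= 1 / 4.
  apply: le_trans Hs; apply: le_trans (ler_norm _).
  apply: le_trans (box_le_lsum (norminf z) _ Hw) => //.
  exact: (@box_sum_term R D (norminf z) (fun x => `|T x s - ddelta R x|) z).
split.
  have := Bz 0; rewrite /ddelta eqxx => H.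
  have := ler_norm (1 - T 0 s); rewrite distrC; lra.
move=> z Hz; have := Bz z; rewrite /ddelta (negbTE Hz) subr0 => H.
exact: le_trans (ler_norm _) H.
Qed.


Lemma sderiv_exists f x s0 : l1_summable f -> 0 <= s0 ->
  exists d, has_sderiv (L f) x s0 d.
Proof.
move=> Hf Hs0.
have [e e0 Hgap] := T_gap.
have [sg [Hsg0 Hsgs Hcase Hgap']] : exists sg : R, [/\ 0 <= sg, sg <= s0,
    sg = s0 \/ 0 < sg &
    3 / 4 <= T 0 sg /\ forall z, z != 0 -> T z sg <= 1 / 4].
  have gap0 : 3 / 4 <= T 0 0 /\ forall z, z != 0 -> T z 0 <= 1 / 4.
    split; first by rewrite (T0 HT) eqxx /=; lra.
    by move=> z Hz; rewrite (T0 HT) (negbTE Hz) /=; lra.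
  case: (ltP s0 e) => Hse.
    exists s0; split => //; first by left.
    case: (eqVneq s0 0) => [->|Hn0] //.
    by apply: Hgap => //; rewrite lt_neqAle eq_sym Hn0 Hs0.
  exists (e / 2); split.
  - by rewrite divr_ge0 // ltW.
  - by apply: le_trans Hse; rewrite ler_pdivrMr // ler_peMr ?ler1n // ltW.
  - by right; rewrite divr_gt0.
  - by apply: Hgap; [rewrite divr_gt0 | rewrite ltr_pdivrMr // ltr_pMr // ltr1n].
have [G3 G1] := Hgap'.
pose g := fun y => L f y (s0 - sg).
have Hsd : 0 <= s0 - sg by rewrite subr_ge0.
have Hg : l1_summable g by exact: (L_l1 HT).
have [K HK] := L_bound HT Hg Hsg0.
have K0 : 0 <= K by apply: le_trans (HK x); exact: normr_ge0.
pose M := 4 * K.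
have M0 : 0 <= M by rewrite /M mulr_ge0.
pose F := fun y => g y + M * (y == x)%:R.
have HF : l1_summable F by apply: l1_add => //; exact: l1_pt.
have LF y t : 0 <= t -> L F y t = L g y t + M * T (y - x) t.
  by move=> t0; rewrite (L_add HT) //; [rewrite (L_pt T) | exact: l1_pt].
have [Pmax _] := HS.2 _ HF sg Hsg0 x.
have [dF HdF _] : exists2 d, has_sderiv (L F) x sg d & d <= 0.
  apply: Pmax => y Hy; rewrite !LF // subrr.
  have Hyx : y - x != 0 by rewrite -norminf_eq0 Hy.
  have := G1 _ Hyx; have := HK y; have := HK x.
  have := ler_norm (L g y sg); have := ler_norm (- L g x sg); rewrite normrN.
  move=> h1 h2 h3 h4 h5.
  have h6 : M * T (y - x) sg <= M * (1 / 4) by rewrite ler_wpM2l.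
  have h7 : M * (3 / 4) <= M * T 0 sg by rewrite ler_wpM2l.
  rewrite /M in h6 h7 *; lra.
have Hdx : l1_summable (fun y => (1 : R) * (y == x)%:R) by exact: l1_pt.
have [Pmax' _] := HS.2 _ Hdx sg Hsg0 x.
have [dd Hdd _] : exists2 d, has_sderiv (L (fun y => 1 * (y == x)%:R)) x sg d & d <= 0.
  apply: Pmax' => y Hy; rewrite !(Lpt1 T) subrr.
  have Hyx : y - x != 0 by rewrite -norminf_eq0 Hy.
  have := G1 _ Hyx; lra.
have Hgd : has_sderiv (L g) x sg (dF - M * dd).
  have C : (fun h => (L F x (sg + h) - L F x sg) / h
      - M * ((L (fun y => 1 * (y == x)%:R) x (sg + h) - L (fun y => 1 * (y == x)%:R) x sg) / h))
      @ within [set h | h != 0 /\ 0 <= sg + h] (nbhs (0 : R)) --> dF - M * dd.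
    by apply: cvgB; [exact: HdF | apply: cvgMr; exact: Hdd].
  apply: (within_transfer _ C).
  exists 1; first exact: ltr01.
  move=> h _ /= [hn0 hpos]; split => //.
  rewrite !LF // !(Lpt1 T).
  rewrite -quot_lin; congr (_ / h); ring.
exists (dF - M * dd).
have [e' e'0 He'] : exists2 e' : R, 0 < e' & forall h, `|h| < e' -> 0 <= s0 + h -> 0 <= sg + h.
  case: Hcase => [->|Psg]; first by exists 1 => //; exact: ltr01.
  exists sg => // h Hh _; have := ler_norm (- h); rewrite normrN; lra.
have Tr t : 0 <= t -> L f x (t + (s0 - sg)) = L g x t.
  by move=> t0; rewrite (L_transport HT).
apply: (within_transfer _ Hgd).
exists e' => // h /= Hh [hn0 hpos].
rewrite sub0r normrN in Hh.
have hpos' := He' h Hh hpos.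
split => //.
rewrite -(Tr _ hpos') -(Tr _ Hsg0).
have -> : sg + h + (s0 - sg) = s0 + h by ring.
by have -> : sg + (s0 - sg) = s0 by ring.
Qed.


Lemma main_deriv f x s0 : l1_summable f -> 0 <= s0 ->
  has_sderiv (L f) x s0 (box_sum 1 (fun xi => aco T xi * L f (x + xi) s0)).
Proof.
move=> Hf Hs0.
have [d Hd] := sderiv_exists x Hf Hs0.
pose g' := fun y => L f y s0.
have Hg' : l1_summable g' by exact: (L_l1 HT).
have C1 := @deriv0 R D T HS g' x Hg'.
have C2 := sderiv_right Hs0 Hd.
have HN : \forall h \near (0 : R), (fun h => 0 < h) h ->
   (fun h => 0 < h) h /\
   (fun h => (L f x (s0 + h) - L f x s0) / h) h = (fun h => (L g' x h - g' x) / h) h.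
  exists 1; first exact: ltr01.
  move=> h _ /= h0; split => //.
  by rewrite /g' -(L_transport HT) // ?ltW // [s0 + h]addrC.
have C3 := within_transfer HN C1.
by rewrite -(right_unique C2 C3).
Qed.

Lemma aco_sum0 : box_sum 1 (aco T) = 0.
Proof.
pose g := fun y : ZD D => \sum_(j : 'rV['I_(2 * 1 + 1)]_D) (1 : R) * (y == phi j)%:R.
have Hg : l1_summable g by apply: l1_big => j; exact: l1_pt.
have gE y : g y = (norminf y <= 1)%N%:R.
  rewrite /g -(count_box R); apply: eq_bigr => j _; rewrite mul1r.
  by rewrite eq_sym.
have C1 := @deriv0 R D T HS g 0 Hg.
have Hloc y : norminf (y - 0) = 1%N -> g y = g 0.
  by rewrite subr0 => Hy; rewrite !gE Hy norminf0.
have C2 := @ext_zero_deriv R D T HS g 0 Hg Hloc.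
rewrite (L_at0 HT) in C2.
have E := right_unique C1 C2.
rewrite -E; apply: eq_bigr => j _.
by rewrite add0r gE norminf_phi mulr1.
Qed.

End Main.

Unset Implicit Arguments. Set Strict Implicit.
Local Close Scope classical_set_scope.

Theorem theoremA7 (R : realType) (D : nat) (hD : (0 < D)%N)
    (T : ZD D -> R -> R) (f : ZD D -> R) :
  scale_space_family T -> l1_summable f ->
  let L := pre_ss_rep T f in
  exists a : ZD D -> R,
    [/\ (forall xi, (1 < norminf xi)%N -> a xi = 0),
        (forall xi, xi != 0 -> 0 <= a xi),
        lsum a = 0,
        (forall x, L x 0 = f x) &
        (forall x s, 0 <= s ->
           has_sderiv L x s (lsum (fun xi => a xi * L (x + xi) s)))].
Proof.
move=> HS Hf L.
exists (aco T); split.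
- by move=> xi Hxi; exact: (aco_out HS Hxi).
- by move=> xi Hxi; exact: (aco_pos HS Hxi).
- rewrite (@lsum_box R D (aco T) 1); first exact: aco_sum0.
  by move=> y Hy; exact: (aco_out HS Hy).
- by move=> x; rewrite /L (L_at0 HS.1).
- move=> x s Hs; rewrite /L.
  rewrite (@lsum_box R D _ 1); first exact: main_deriv.
  by move=> y Hy; rewrite (aco_out HS Hy) mul0r.
Qed.
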